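(* Let $n\ge2$ and let $f$ be a function from the set of Schubert problems for $GL_n$ (triples $(u,v,w)\in S_n^3$ with $l(u)+l(v)+l(w)=\binom n2$) to $\mathbb Z$ satisfying: (1) (descent-cycling invariance) for every triple $(u,v,w)\in S_n^3$ with $l(u)+l(v)+l(w)=\binom n2-1$ and every $i\in\{1,\dots,n-1\}$ with $u(i)<u(i+1)$, $v(i)<v(i+1)$, $w(i)<w(i+1)$, one has $f(us_i,v,w)=f(u,vs_i,w)=f(u,v,ws_i)$; (2) $f(u,v,w)=0$ whenever there is $i$ with $u(i)<u(i+1)$, $v(i)<v(i+1)$ and $w(i)<w(i+1)$; (3) $f(\mathrm{id},\mathrm{id},w_0)=1$. Then $f$ obeys Monk's rule: let $\pi\in S_n$, $i\in\{1,\dots,n-1\}$, and let $\tau\in S_n$ be defined by $\tau(m)=n+1-\pi(m)$. Let $\sigma$ be obtained from $\tau$ by swapping the entries in positions $j<k$, where $\tau(j)>\tau(k)$ and $l(\sigma)=l(\tau)-1$. Then $f(\pi,s_i,\sigma)=1$ if $j\le i<k$, and $f(\pi,s_i,\sigma)=0$ if $j,k\le i$ or $j,k\ge i+1$.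
   Context: Permutations are in one-line notation; $l$ is the number of inversions; $w_0=n\,n{-}1\cdots1$; $\mathrm{id}$ is the identity; $s_i$ is the transposition $i\leftrightarrow i+1$, and $us_i$ denotes $u$ with the entries in positions $i,i+1$ swapped. Note $(\pi,s_i,\sigma)$ is automatically a Schubert problem. *)

(* Defs.v *)
(* Permutations of {1..n} are modelled as 'S_n (0-indexed). *)
From mathcomp Require Import all_boot all_order all_fingroup all_algebra.
Set Implicit Arguments. Unset Strict Implicit. Unset Printing Implicit Defensive.

Definition len n (u : 'S_n) : nat :=
  #|[set p : 'I_n * 'I_n | (p.1 < p.2) && (u p.2 < u p.1)]|.

(* u s_(i,j): u with the entries in positions i and j swapped;
   (tperm i j * u) x = u (tperm i j x) *)
Definition swap_pos n (u : 'S_n) (i j : 'I_n) : 'S_n := (tperm i j * u)%g.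

Definition w0 n : 'S_n := perm (@rev_ord_inj n).

Definition schubert n (u v w : 'S_n) : Prop := len u + len v + len w = 'C(n, 2).

(* position i is an ascent of u (i' is the position i+1) *)
Definition ascent n (u : 'S_n) (i i' : 'I_n) : bool := u i < u i'.

(* Main.v *)
Require Import Defs.
From mathcomp Require Import all_boot all_order all_fingroup all_algebra.
From mathcomp Require Import zify.
Set Implicit Arguments. Unset Strict Implicit. Unset Printing Implicit Defensive.

Lemma swapE n (u : 'S_n) i j x : swap_pos u i j x = u (tperm i j x).
Proof. by rewrite /swap_pos permM. Qed.

Lemma swapL n (u : 'S_n) i j : swap_pos u i j i = u j.
Proof. by rewrite swapE tpermL. Qed.

Lemma swapR n (u : 'S_n) i j : swap_pos u i j j = u i.
Proof. by rewrite swapE tpermR. Qed.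

Lemma swapK n (u : 'S_n) i j : swap_pos (swap_pos u i j) i j = u.
Proof. by rewrite /swap_pos tpermKg. Qed.

Lemma mulw0E n (u : 'S_n) x : nat_of_ord ((u * w0 n)%g x) = n - (u x).+1.
Proof. by rewrite permM /w0 permE. Qed.

Lemma len_swap_set n (U : 'S_n) i j :
  len (swap_pos U i j) =
  #|[set p : 'I_n * 'I_n | (tperm i j p.1 < tperm i j p.2) && (U p.2 < U p.1)]|.
Proof.
rewrite /len.
have inj : injective (fun p : 'I_n * 'I_n => (tperm i j p.1, tperm i j p.2)).
  by move=> [a b] [c d] /= [/perm_inj -> /perm_inj ->].
rewrite -[#|[set p : 'I_n * 'I_n | (tperm i j p.1 < tperm i j p.2) && _]|](card_preimset _ inj).
congr (#|pred_of_set _|); apply/setP => p.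
by rewrite !inE /= !swapE !tpermK.
Qed.

Lemma ordeq n (a b : 'I_n) : (a == b) = (nat_of_ord a == nat_of_ord b). Proof. by []. Qed.

Ltac tcases a i i' :=
  case: (eqVneq a i) => [->|?]; [rewrite tpermL | case: (eqVneq a i') => [->|?];
    [rewrite tpermR | rewrite (@tpermD _ i i' a) 1?eq_sym //]].

Lemma len_swap_asc n (U : 'S_n) (i i' : 'I_n) : val i' = i.+1 -> U i < U i' ->
  len (swap_pos U i i') = (len U).+1.
Proof.
move=> hi hU; have hi' : nat_of_ord i' = i.+1 := hi; rewrite len_swap_set /len.
rewrite -[RHS]add1n.
have -> : 1 = ((i', i) \notin [set p : 'I_n * 'I_n | (p.1 < p.2) && (U p.2 < U p.1)]).
  by rewrite !inE /= hi' ltnNge leqnSn.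
rewrite -cardsU1; congr (#|pred_of_set _|); apply/setP => [[a b]].
rewrite !inE /= !xpair_eqE.
tcases a i i'; tcases b i i'; rewrite ?eqxx ?hU //=.
all: repeat match goal with H : is_true (?x != ?y) |- _ => move: H; rewrite -(inj_eq val_inj) /= => ? end.
all: do 3 try (match goal with |- context [(nat_of_ord (fun_of_perm ?V ?x) < nat_of_ord (fun_of_perm ?V ?y))%N] => case: (ltnP (V x) (V y)) end).
all: rewrite ?ordeq ?andbT ?andbF ?orbF ?orbT //=.
all: try (apply/idP/idP => ?; lia).
all: try lia.
Qed.

Lemma len_swap_desc n (U : 'S_n) (i i' : 'I_n) : val i' = i.+1 -> U i' < U i ->
  (len (swap_pos U i i')).+1 = len U.
Proof.
move=> hi hU; rewrite -(len_swap_asc (U := swap_pos U i i') hi) ?swapK //.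
by rewrite !swapE tpermL tpermR.
Qed.


Lemma swap_conj n (U : 'S_n) (a b p q : 'I_n) :
  swap_pos (swap_pos U a b) p q = swap_pos (swap_pos U p q) (tperm p q a) (tperm p q b).
Proof.
rewrite /swap_pos -tpermJ conjgE tpermV !mulgA; congr (_ * U)%g.
by rewrite -!mulgA tperm2 mulg1.
Qed.

Lemma cover n d : forall (U : 'S_n) (j k : 'I_n), val k = j + d.+1 -> U k < U j ->
  (len (swap_pos U j k)).+1 <= len U /\
  ((len (swap_pos U j k)).+1 = len U ->
     forall m : 'I_n, j < m < k -> ~~ ((U k < U m) && (U m < U j))).
Proof.
elim: d => [|d IH] U j k hk hU.
  have hk' : val k = j.+1 by rewrite hk addn1.
  split; first by rewrite len_swap_desc.
  move=> _ m; have hk2 : nat_of_ord k = j.+1 := hk'; lia.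
have hk2 : nat_of_ord k = j + d.+2 := hk.
have pn : j + d.+1 < n by have := ltn_ord k; lia.
pose p : 'I_n := Ordinal pn.
have hp : nat_of_ord p = j + d.+1 by [].
have hkp : val k = p.+1 by rewrite /= hk2 addnS.
have jp : j != p by rewrite ordeq /=; lia.
have jk : j != k by rewrite ordeq /=; lia.
have pk : p != k by rewrite ordeq /=; lia.
set V := swap_pos U p k.
set W := swap_pos V j p.
have E : swap_pos U j k = swap_pos W p k.
  rewrite /W /V swap_conj swapK tpermL tpermD // eq_sym //.
have Vj : V j = U j by rewrite /V swapE tpermD // eq_sym.
have Vp : V p = U k by rewrite /V swapE tpermL.
have Vk : V k = U p by rewrite /V swapE tpermR.
have Wp : W p = U j by rewrite /W swapE tpermR.
have Wk : W k = U p by rewrite /W swapE tpermD // eq_sym.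
have Vm : forall m : 'I_n, j < m < p -> V m = U m.
  move=> m hm; rewrite /V swapE tpermD // ordeq /=; lia.
have hVjp : V p < V j by rewrite Vp Vj.
have IHV := IH V j p hp hVjp; rewrite -/W in IHV.
rewrite E.
have Up_ne_Uk : U p != U k by rewrite (inj_eq perm_inj).
have Up_ne_Uj : U p != U j by rewrite (inj_eq perm_inj) eq_sym.
case: (ltngtP (U p) (U k)) => hpk; last by move: Up_ne_Uk; rewrite ordeq hpk eqxx.
-
  have lV : len V = (len U).+1 by apply: len_swap_asc.
  have lW : (len (swap_pos W p k)).+1 = len W by apply: len_swap_desc => //; rewrite Wk Wp; lia.
  case: IHV => IH1 IH2.
  split; first lia.
  move=> heq m /andP[jm mk].
  have: (len W).+1 = len V by lia.
  move/IH2 => H.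
  case: (ltngtP m p) => mp.
  + have := H m; rewrite jm mp Vp Vj Vm ?jm ?mp //=; by apply.
  + lia.
  + have -> : m = p by apply/val_inj.
    apply/negP => /andP[h1 h2]; lia.
- case: (ltngtP (U p) (U j)) => hpj; last by move: Up_ne_Uj; rewrite ordeq hpj eqxx.
  +
    have lV : (len V).+1 = len U by apply: len_swap_desc.
    have lW : (len (swap_pos W p k)).+1 = len W by apply: len_swap_desc => //; rewrite Wk Wp; lia.
    case: IHV => IH1 IH2.
    split; first lia.
    move=> heq; lia.
  + have lV : (len V).+1 = len U by apply: len_swap_desc.
    have lW : len (swap_pos W p k) = (len W).+1 by apply: len_swap_asc => //; rewrite Wk Wp; lia.
    case: IHV => IH1 IH2.
    split; first lia.
    move=> heq m /andP[jm mk].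
    have: (len W).+1 = len V by lia.
    move/IH2 => H.
    case: (ltngtP m p) => mp.
    * have := H m; rewrite jm mp Vp Vj Vm ?jm ?mp //=; by apply.
    * lia.
    * have -> : m = p by apply/val_inj.
      apply/negP => /andP[h1 h2]; lia.
Qed.

Lemma cover_dir n (U : 'S_n) (j k : 'I_n) : j < k ->
  (len (swap_pos U j k)).+1 = len U -> U k < U j.
Proof.
move=> jk hl; case: (ltngtP (U k) (U j)) => // h.
- have hk : val k = j + (k - j - 1).+1 by rewrite /=; lia.
  have h' : swap_pos U j k k < swap_pos U j k j by rewrite !swapE tpermL tpermR.
  have [h1 _] := cover hk h'; rewrite swapK in h1; lia.
- have : U k = U j by apply/val_inj.
  move/perm_inj => /eqP; rewrite ordeq; lia.
Qed.

Lemma cover_mid n (U : 'S_n) (j k m : 'I_n) : j < k ->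
  (len (swap_pos U j k)).+1 = len U -> j < m < k -> U m < U k \/ U j < U m.
Proof.
move=> jk hl hm.
have hk : val k = j + (k - j - 1).+1 by rewrite /=; lia.
have [_ h2] := cover hk (cover_dir jk hl).
have := h2 hl m hm.
have : U m != U k by rewrite (inj_eq perm_inj) ordeq; lia.
have : U m != U j by rewrite (inj_eq perm_inj) ordeq; lia.
rewrite !ordeq; lia.
Qed.

Lemma len1 n : len (1 : 'S_n)%g = 0.
Proof.
apply/eqP; rewrite cards_eq0; apply/eqP/setP => p; rewrite !inE !perm1.
by apply/negP => /andP[h1 h2]; lia.
Qed.

Lemma len_tperm n (i i' : 'I_n) : val i' = i.+1 -> len (tperm i i') = 1.
Proof.
move=> hi; have := @len_swap_asc n 1 i i' hi.
rewrite /swap_pos mulg1 len1 !perm1 => -> //.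
by have hi' : nat_of_ord i' = i.+1 := hi; lia.
Qed.

Lemma sum_lt n b : \sum_(a < n) (a < b : nat) = minn b n.
Proof.
elim: n => [|n IH]; first by rewrite big_ord0 minn0.
rewrite big_ord_recr /= IH; lia.
Qed.

Lemma cardA n : #|[set p : 'I_n * 'I_n | p.1 < p.2]| = 'C(n, 2).
Proof.
rewrite -sum1_card.
have -> : \sum_(p in [set p : 'I_n * 'I_n | p.1 < p.2]) 1 =
          \sum_(p : 'I_n * 'I_n) (p.1 < p.2 : nat).
  rewrite big_mkcond /=; apply: eq_bigr => p _; rewrite inE; by case: (p.1 < p.2).
rewrite -(pair_big xpredT xpredT (fun a b : 'I_n => (a < b : nat))) /=.
rewrite exchange_big /= -bin2_sum big_mkord; apply: eq_bigr => b _.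
rewrite sum_lt; have := ltn_ord b; lia.
Qed.

Lemma len_w0 n (u : 'S_n) : len (u * w0 n)%g + len u = 'C(n, 2).
Proof.
rewrite -cardA -(cardsID [set p : 'I_n * 'I_n | u p.2 < u p.1]) addnC /len.
congr (_ + _); congr (#|pred_of_set _|); apply/setP => p; rewrite !inE //.
rewrite !mulw0E andbC; case: (ltnP p.1 p.2) => h; rewrite ?andbT ?andbF //.
have hne : nat_of_ord (u p.1) != nat_of_ord (u p.2).
  apply/negP => /eqP /val_inj /perm_inj E; move: h; rewrite E; lia.
have := ltn_ord (u p.1); have := ltn_ord (u p.2).
case: (ltnP (u p.2) (u p.1)) => h2 * /=.
all: set x := nat_of_ord (u p.1) in hne h2 *; set y := nat_of_ord (u p.2) in hne h2 *.
- apply/negbTE; rewrite -leqNgt. lia.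
- move: hne; rewrite neq_ltn. lia.
Qed.

Lemma incr_id n (g : 'I_n -> 'I_n) :
  (forall p p' : 'I_n, val p' = p.+1 -> g p < g p') -> forall x, nat_of_ord (g x) = x.
Proof.
move=> H.
have up : forall m (hm : m < n), m <= g (Ordinal hm).
  elim => [|m IH] hm; first by [].
  have hm' : m < n by lia.
  have := IH hm'; have := H (Ordinal hm') (Ordinal hm) erefl; lia.
have down : forall d m (hm : m < n), m + d = n.-1 -> g (Ordinal hm) + d <= n.-1.
  elim => [|d IH] m hm e.
    have := ltn_ord (g (Ordinal hm)); lia.
  have hm' : m.+1 < n by lia.
  have := IH m.+1 hm' (ltac:(lia)); have := H (Ordinal hm) (Ordinal hm') erefl; lia.
move=> x; have -> : x = Ordinal (ltn_ord x) by apply/val_inj.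
have := up _ (ltn_ord x); have := down (n.-1 - x) _ (ltn_ord x) (ltac:(have := ltn_ord x; lia)).
rewrite /=; lia.
Qed.

Lemma len0 n (u : 'S_n) : len u = 0 -> u = 1%g.
Proof.
move=> h; apply/permP => x; rewrite perm1; apply/val_inj => /=.
apply: incr_id => p p' hp.
have : (p, p') \notin [set p : 'I_n * 'I_n | (p.1 < p.2) && (u p.2 < u p.1)].
  by move: h => /eqP; rewrite cards_eq0 => /eqP ->; rewrite inE.
rewrite inE /= negb_and.
have hp' : nat_of_ord p' = p.+1 := hp.
have hne : nat_of_ord (u p) != nat_of_ord (u p').
  apply/negP => /eqP /val_inj /perm_inj E; move: hp'; rewrite E; lia.
set x1 := nat_of_ord (u p) in hne *; set y1 := nat_of_ord (u p') in hne *.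
move: hne; rewrite neq_ltn; case/orP => //= h1; rewrite -leqNgt; lia.
Qed.

Lemma desc_w0 n (w : 'S_n) :
  (forall p p' : 'I_n, val p' = p.+1 -> w p' < w p) -> w = w0 n.
Proof.
move=> H; apply/permP => x; apply/val_inj; rewrite /w0 permE /=.
have hyp : forall p p' : 'I_n, val p' = p.+1 -> rev_ord (w p) < rev_ord (w p').
  move=> p p' hp /=; have := H p p' hp; have := ltn_ord (w p); have := ltn_ord (w p'); lia.
have key := @incr_id n (fun x => rev_ord (w x)) hyp x.
move: key => /=; have := ltn_ord (w x); lia.
Qed.

Lemma tpermN n (a b x : 'I_n) :
  nat_of_ord (tperm a b x) = if x == a then nat_of_ord b else if x == b then nat_of_ord a else nat_of_ord x.
Proof.
case: tpermP => [->|->|/eqP xa /eqP xb]; rewrite ?eqxx //.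
- by case: eqP => // ->.
- by rewrite (negbTE xa) (negbTE xb).
Qed.

Lemma asc_tperm n (i i' p p' : 'I_n) : val i' = i.+1 -> val p' = p.+1 -> p != i ->
  tperm i i' p < tperm i i' p'.
Proof.
move=> hi hp pi; rewrite !tpermN !ordeq.
have hi' : nat_of_ord i' = i.+1 := hi; have hp' : nat_of_ord p' = p.+1 := hp.
move: pi; rewrite ordeq => pi.
do 4 try (case: eqP => ?); lia.
Qed.

Definition HypA n (f : 'S_n -> 'S_n -> 'S_n -> int) :=
  forall (u v w : 'S_n), len u + len v + len w = 'C(n, 2) - 1 ->
        forall i i' : 'I_n, val i' = (val i).+1 ->
        ascent u i i' -> ascent v i i' -> ascent w i i' ->
        f (swap_pos u i i') v w = f u (swap_pos v i i') w /\
        f u (swap_pos v i i') w = f u v (swap_pos w i i').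

Definition HypB n (f : 'S_n -> 'S_n -> 'S_n -> int) :=
  forall (u v w : 'S_n), schubert u v w ->
        (exists i i' : 'I_n, val i' = (val i).+1 /\
           [/\ ascent u i i', ascent v i i' & ascent w i i']) ->
        f u v w = 0%R.

Lemma perm_ne n (u : 'S_n) (a b : 'I_n) : a != b -> nat_of_ord (u a) != nat_of_ord (u b).
Proof. by move=> h; rewrite -ordeq (inj_eq perm_inj). Qed.

Lemma delta n f (H1 : @HypA n f) (H2 : HypB f) (H3 : f 1%g 1%g (w0 n) = 1%R) :
  forall l (u w : 'S_n), len u <= l -> len u + len w = 'C(n, 2) ->
  f u 1%g w = if w == (u * w0 n)%g then 1%R else 0%R.
Proof.
elim => [|l IH] u w hl hs.
all: case: (boolP [exists p : 'I_n, exists p' : 'I_n, (nat_of_ord p' == p.+1) && (w p < w p')]).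
- case/existsP => p /existsP [p' /andP [/eqP hp hw]].
  case: (ltnP (u p) (u p')) => hu.
    rewrite H2; last first.
      by exists p, p'; split => //; split => //; rewrite /ascent !perm1 hp.
      by rewrite /schubert len1 addn0.
    case: eqP => // E; move: hw; rewrite E !mulw0E; lia.
  have hd : u p' < u p.
    have := perm_ne u (_ : p != p'); rewrite ordeq hp => /(_ (ltac:(lia))); lia.
  have := len_swap_desc hp hd; lia.
- move=> hne.
  have hw : w = w0 n.
    apply: desc_w0 => p p' hp.
    have := perm_ne w (_ : p != p'); rewrite ordeq hp => /(_ (ltac:(lia))) hne2.
    case: (ltnP (w p') (w p)) => // h; move/negP: hne; case; apply/existsP; exists p.
    apply/existsP; exists p'; rewrite hp eqxx /=; lia.
  have hw0 := len_w0 (1 : 'S_n)%g; rewrite mul1g len1 addn0 in hw0.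
  have hu : u = 1%g by apply: len0; rewrite hw in hs; lia.
  by rewrite hu hw mul1g eqxx.
- case/existsP => p /existsP [p' /andP [/eqP hp hw]].
  case: (ltnP (u p) (u p')) => hu.
    rewrite H2; last first.
      by exists p, p'; split => //; split => //; rewrite /ascent !perm1 hp.
      by rewrite /schubert len1 addn0.
    case: eqP => // E; move: hw; rewrite E !mulw0E; lia.
  have hd : u p' < u p.
    have := perm_ne u (_ : p != p'); rewrite ordeq hp => /(_ (ltac:(lia))); lia.
  have hl' := len_swap_desc hp hd.
  set u' := swap_pos u p p' in hl'.
  have [A B] := H1 u' 1%g w (ltac:(rewrite len1; lia)) p p' hp
     (ltac:(by rewrite /ascent /u' !swapE tpermL tpermR))
     (ltac:(by rewrite /ascent !perm1 hp))
     (ltac:(by rewrite /ascent)).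
  rewrite /u' swapK in A; rewrite A B.
  have hw' := len_swap_asc hp hw.
  rewrite (IH u' (swap_pos w p p')); [|lia|lia].
  by rewrite /u' /swap_pos -mulgA (inj_eq (mulgI _)).
- move=> hne.
  have hw : w = w0 n.
    apply: desc_w0 => p p' hp.
    have := perm_ne w (_ : p != p'); rewrite ordeq hp => /(_ (ltac:(lia))) hne2.
    case: (ltnP (w p') (w p)) => // h; move/negP: hne; case; apply/existsP; exists p.
    apply/existsP; exists p'; rewrite hp eqxx /=; lia.
  have hw0 := len_w0 (1 : 'S_n)%g; rewrite mul1g len1 addn0 in hw0.
  have hu : u = 1%g by apply: len0; rewrite hw in hs; lia.
  by rewrite hu hw mul1g eqxx.
Qed.

Lemma step n f (H1 : @HypA n f) (i i' : 'I_n) (hi : val i' = i.+1) (u : 'S_n)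
  (j k p p' : 'I_n) (hp : val p' = p.+1) (pi : p != i) :
  (len (swap_pos (u * w0 n) j k)).+1 = len (u * w0 n) ->
  ((u * w0 n)%g p < (u * w0 n)%g p') = (swap_pos (u * w0 n) j k p < swap_pos (u * w0 n) j k p') ->
  f u (tperm i i') (swap_pos (u * w0 n) j k) =
  f (swap_pos u p p') (tperm i i') (swap_pos (swap_pos u p p' * w0 n) (tperm p p' j) (tperm p p' k)) /\
  (len (swap_pos (swap_pos u p p' * w0 n) (tperm p p' j) (tperm p p' k))).+1 = len (swap_pos u p p' * w0 n).
Proof.
move=> hl hag.
have e1 : (swap_pos u p p' * w0 n)%g = swap_pos (u * w0 n) p p' by rewrite /swap_pos -mulgA.
rewrite e1 -swap_conj.
set U := (u * w0 n)%g in hl hag *. set w := swap_pos U j k in hl hag *.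
have hs : len u + len (tperm i i') + len w = 'C(n,2).
  by rewrite len_tperm //; have := len_w0 u; rewrite -/U; lia.
have hp' : nat_of_ord p' = p.+1 := hp.
have hpp : p != p' by rewrite ordeq hp'; lia.
have hUne := perm_ne U hpp; have hwne := perm_ne w hpp; have hune := perm_ne u hpp.
have huU : (nat_of_ord (u p) < u p') = (nat_of_ord (U p') < U p).
  rewrite /U !mulw0E; have := ltn_ord (u p); have := ltn_ord (u p').
  case: (ltnP (u p) (u p')) => h *; apply/esym.
  - lia.
  - apply/negbTE; rewrite -leqNgt; lia.
have st := asc_tperm hi hp pi.
case: (ltnP (U p) (U p')) => hU.
- have hw : w p < w p' by rewrite -hag.
  have hud : u p' < u p.
    have : ~~ (nat_of_ord (u p) < u p') by rewrite huU -leqNgt ltnW.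
    rewrite -leqNgt; move: hune; rewrite neq_ltn; lia.
  have lu := len_swap_desc hp hud.
  have [A B] := H1 (swap_pos u p p') (tperm i i') w (ltac:(lia)) p p' hp
     (ltac:(by rewrite /ascent !swapE tpermL tpermR)) st hw.
  rewrite swapK in A.
  split; first by rewrite A B.
  rewrite (len_swap_asc hp hw) (len_swap_asc hp hU); lia.
- have hU' : U p' < U p by lia.
  have hw : w p' < w p.
    have := hag; rewrite ltnNge hU /= => /esym/negbT; rewrite -leqNgt; lia.
  have hua : u p < u p' by rewrite huU.
  have lw := len_swap_desc hp hw.
  have hs2 : len u + len (tperm i i') + len (swap_pos w p p') = 'C(n, 2) - 1 by lia.
  have aw : ascent (swap_pos w p p') p p'.
    by rewrite /ascent swapL swapR.
  have [A B] := H1 u (tperm i i') (swap_pos w p p') hs2 p p' hp hua st aw.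
  rewrite swapK in B.
  split; first by rewrite -B -A.
  have := len_swap_desc hp hU'; lia.
Qed.

Lemma agree_k n (U : 'S_n) (j p k : 'I_n) : j < p -> val k = p.+1 ->
  (len (swap_pos U j k)).+1 = len U ->
  (U p < U k) = (swap_pos U j k p < swap_pos U j k k).
Proof.
move=> jp hk hl; have hk' : nat_of_ord k = p.+1 := hk.
have jk : j < k by lia.
rewrite swapR swapE tpermD; last 2 first.
  by rewrite ordeq; lia.
  by rewrite ordeq; lia.
have hd := cover_dir jk hl.
have := cover_mid jk hl (ltac:(apply/andP; split; lia) : j < p < k).
case=> h.
- have -> : nat_of_ord (U p) < U j by lia.
  by rewrite h.
- have -> : (nat_of_ord (U p) < U j) = false by apply/negbTE; rewrite -leqNgt; lia.
  by apply/negbTE; rewrite -leqNgt; lia.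
Qed.

Lemma agree_j n (U : 'S_n) (j j1 k : 'I_n) : val j1 = j.+1 -> j1 < k ->
  (len (swap_pos U j k)).+1 = len U ->
  (U j < U j1) = (swap_pos U j k j < swap_pos U j k j1).
Proof.
move=> hj hk hl; have hj' : nat_of_ord j1 = j.+1 := hj.
have jk : j < k by lia.
rewrite swapL (swapE U j k j1) tpermD; last 2 first.
  by rewrite ordeq; lia.
  by rewrite ordeq; lia.
have hd := cover_dir jk hl.
have := cover_mid jk hl (ltac:(apply/andP; split; lia) : j < j1 < k).
case=> h.
- have -> : (nat_of_ord (U j) < U j1) = false by apply/negbTE; rewrite -leqNgt; lia.
  by apply/esym/negbTE; rewrite -leqNgt; lia.
- rewrite h; apply/esym; lia.
Qed.

Lemma straddle n f (H1 : @HypA n f) (H2 : HypB f) (H3 : f 1%g 1%g (w0 n) = 1%R)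
  (i i' : 'I_n) (hi : val i' = i.+1) :
  forall d (u : 'S_n) (j k : 'I_n), val k = j + d.+1 -> j <= i < k ->
  (len (swap_pos (u * w0 n) j k)).+1 = len (u * w0 n) ->
  f u (tperm i i') (swap_pos (u * w0 n) j k) = 1%R.
Proof.
have hi' : nat_of_ord i' = i.+1 := hi.
elim => [|d IH] u j k hk /andP [ji ik] hl.
  have hk' : nat_of_ord k = j + 1 := hk.
  have ej : j = i by apply/val_inj => /=; lia.
  have ek : k = i' by apply/val_inj => /=; lia.
  subst j k.
  set U := (u * w0 n)%g in hl *.
  have hd := cover_dir (ltac:(lia) : i < i') hl.
  have hu : u i < u i' by move: hd; rewrite /U !mulw0E; have := ltn_ord (u i); lia.
  have hs := len_w0 u; rewrite -/U in hs.
  have [A B] := H1 u 1%g (swap_pos U i i') (ltac:(rewrite len1; lia)) i i' hi hu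
     (ltac:(by rewrite /ascent !perm1 hi')) (ltac:(by rewrite /ascent swapL swapR)).
  have e1 : swap_pos 1%g i i' = tperm i i' by rewrite /swap_pos mulg1.
  rewrite e1 in B; rewrite B swapK (delta H1 H2 H3 (leqnn _)); first by rewrite eqxx.
  lia.
have hk' : nat_of_ord k = j + d.+2 := hk.
case: (ltnP i.+1 k) => hik.
  have pn : j + d.+1 < n by have := ltn_ord k; lia.
  pose p : 'I_n := Ordinal pn.
  have hkp : val k = p.+1 by rewrite /= hk' addnS.
  have pi : p != i by rewrite ordeq /=; lia.
  have jp : j < p by rewrite /=; lia.
have [A B] := step H1 hi hkp pi hl (agree_k jp hkp hl).
  rewrite tpermR tpermD in A B; try by rewrite ordeq /=; lia.
  rewrite A; apply: IH => //=; apply/andP; split; lia.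
have j1n : j.+1 < n by have := ltn_ord k; lia.
pose j1 : 'I_n := Ordinal j1n.
have hj1 : val j1 = j.+1 by [].
have ji2 : j != i by rewrite ordeq; lia.
have j1k : j1 < k by rewrite /=; lia.
have [A B] := step H1 hi hj1 ji2 hl (agree_j hj1 j1k hl).
rewrite tpermL tpermD in A B; try by rewrite ordeq /=; lia.
rewrite A; apply: IH => //=.
- lia.
- apply/andP; split; lia.
Qed.

Lemma sameside n f (H1 : @HypA n f) (H2 : HypB f)
  (i i' : 'I_n) (hi : val i' = i.+1) :
  forall d (u : 'S_n) (j k : 'I_n), val k = j + d.+1 -> (k <= i) || (i < j) ->
  (len (swap_pos (u * w0 n) j k)).+1 = len (u * w0 n) ->
  f u (tperm i i') (swap_pos (u * w0 n) j k) = 0%R.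
Proof.
have hi' : nat_of_ord i' = i.+1 := hi.
elim => [|d IH] u j k hk hside hl.
  have hk' : nat_of_ord k = j + 1 := hk.
  have hk2 : val k = j.+1 by rewrite hk addn1.
  set U := (u * w0 n)%g in hl *.
  have hd := cover_dir (ltac:(lia) : j < k) hl.
  have hu : u j < u k by move: hd; rewrite /U !mulw0E; have := ltn_ord (u j); lia.
  have hs := len_w0 u; rewrite -/U in hs.
  apply: H2.
    rewrite /schubert len_tperm //; lia.
  exists j, k; split => //; split => //.
  - by apply: asc_tperm => //; rewrite ordeq; lia.
  - by rewrite /ascent swapL swapR.
have hk' : nat_of_ord k = j + d.+2 := hk.
have pn : j + d.+1 < n by have := ltn_ord k; lia.
pose p : 'I_n := Ordinal pn.
have hkp : val k = p.+1 by rewrite /= hk' addnS.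
have pi : p != i by rewrite ordeq /=; lia.
have jp : j < p by rewrite /=; lia.
have [A B] := step H1 hi hkp pi hl (agree_k jp hkp hl).
rewrite tpermR tpermD in A B; try by rewrite ordeq /=; lia.
rewrite A; apply: IH => //=; lia.
Qed.

Theorem theorem1 (n : nat) (hn : 2 <= n) (f : 'S_n -> 'S_n -> 'S_n -> int)
  (H1 : forall (u v w : 'S_n), len u + len v + len w = 'C(n, 2) - 1 ->
        forall i i' : 'I_n, val i' = (val i).+1 ->
        ascent u i i' -> ascent v i i' -> ascent w i i' ->
        f (swap_pos u i i') v w = f u (swap_pos v i i') w /\
        f u (swap_pos v i i') w = f u v (swap_pos w i i'))
  (H2 : forall (u v w : 'S_n), schubert u v w ->
        (exists i i' : 'I_n, val i' = (val i).+1 /\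
           [/\ ascent u i i', ascent v i i' & ascent w i i']) ->
        f u v w = 0%R)
  (H3 : f 1%g 1%g (w0 n) = 1%R) :
  forall (pi : 'S_n) (i i' : 'I_n), val i' = (val i).+1 ->
  forall j k : 'I_n,
    let tau := (pi * w0 n)%g in
    let sigma := swap_pos tau j k in
    j < k -> tau k < tau j -> len sigma = len tau - 1 ->
    [/\ (j <= i < k -> f pi (tperm i i') sigma = 1%R),
        (j <= i -> k <= i -> f pi (tperm i i') sigma = 0%R)
      & (i < j -> i < k -> f pi (tperm i i') sigma = 0%R)].
Proof.
move=> pi i i' hi j k tau sigma jk hk hl.
have H1' : HypA f := H1.
have H2' : HypB f := H2.
have hkd : val k = j + (k - j - 1).+1 by rewrite /=; lia.
have [c1 _] := cover hkd hk.
have hl' : (len sigma).+1 = len tau by move: hl c1; rewrite /sigma; lia.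
split.
- move=> hjk; exact: (straddle H1' H2' H3 hi hkd hjk hl').
- move=> _ ki; apply: (sameside H1' H2' hi hkd _ hl'); by rewrite ki.
- move=> ij _; apply: (sameside H1' H2' hi hkd _ hl'); by rewrite ij orbT.
Qed.
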